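(* Fix $b\in(0,1)$ and $0\le\rho\le1$ (with $\rho<1$), and let $\tau:=\rho(1-\rho)^{-1}(1-b)^{-1}$. Consider HL-PushTASEP on $\mathbb{Z}_{\geq 0}$ in which, in addition, particles enter the system through site $0$ at the times of an independent Poisson process of rate $\tau$ (an entering particle arrives at site $0$ and then proceeds as an activated particle under the HL-PushTASEP rules). Then the product Bernoulli measure $\nu_\rho$, under which the occupation variables $\{\eta(x)\}_{x\in\mathbb{Z}_{\geq0}}$ are independent $\mathrm{Ber}(\rho)$ random variables, is invariant for this dynamics: if the process starts from $\nu_\rho$, then at every time $t\ge0$ the occupation variables $\{\eta_t(x)\}_{x\in\mathbb{Z}_{\ge0}}$ are i.i.d. $\mathrm{Ber}(\rho)$.
   Context: HL-PushTASEP on $\mathbb{Z}_{\geq 0}$ with parameter $b\in(0,1)$: particles occupy sites of $\mathbb{Z}_{\geq 0}$, at most one per site, each with an independent rate-$1$ exponential clock. An activated particle moves one step to the right and then continues step by step with probability $b$ per further step (i.e., the particle at $x_m$ jumps $j$ steps with probability $(1-b)b^{j-1}$ for $1\leq j<x_{m+1}-x_m$); with probability $b^{x_{m+1}-x_m-1}$ it reaches the site $x_{m+1}$ of its right neighbour, stops there, and the particle previously at $x_{m+1}$ is instantaneously activated and moves by the same rule. $\eta_t(x)=1$ if site $x$ is occupied at time $t$ and $0$ otherwise. *)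

(* Defs.v *)
From HB Require Import structures.
From mathcomp Require Import all_boot all_order all_algebra.
From mathcomp Require Import all_classical all_reals all_analysis.
Set Implicit Arguments. Unset Strict Implicit. Unset Printing Implicit Defensive.
Import Order.TTheory GRing.Theory Num.Theory.
Local Open Scope ring_scope.

(* Configurations of the window {0,...,n-1} of Z_{>=0}. *)
Definition config (n : nat) := {ffun 'I_n -> bool}.

Definition occ n (e : config n) (q : nat) : bool :=
  [exists i : 'I_n, (nat_of_ord i == q) && e i].

Definition setb n (e : config n) (q : nat) (v : bool) : config n :=
  [ffun i : 'I_n => if nat_of_ord i == q then v else e i].

Section Dyn.
Variables (R : realType) (b : R) (n : nat).

Definition dirac (e : config n) : config n -> R := fun f => (f == e)%:R.

(* [fly k e q]: law of the resulting configuration when an activated (flying)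
   particle, not counted in [e], is about to make its next step onto site q.  Step onto
   an occupied site: stop there and the particle previously there becomes the
   flying particle.  Leaving the window: the particle exits the window.
   [k] is fuel; [k = n.+1] always suffices. *)
Fixpoint fly (k : nat) (e : config n) (q : nat) : config n -> R :=
  match k with
  | 0 => dirac e
  | k'.+1 =>
      if (q < n)%N then
        if occ e q then fly k' e q.+1
        else fun f => (1 - b) * dirac (setb e q true) f + b * fly k' e q.+1 f
      else dirac e
  end.

(* Generator (Q-matrix) of the window-restricted HL-PushTASEP with entry of
   particles at site 0 at rate tau. *)
Definition Qrate (tau : R) (e f : config n) : R :=
  \sum_(i : 'I_n | e i) fly n.+1 (setb e i false) i.+1 f
  + tau * fly n.+1 e 0 f
  - (if e == f then (#|[set i | e i]|%:R + tau) else 0).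

Definition evolve (tau : R) (v : config n -> R) : config n -> R :=
  fun f => \sum_(e : config n) v e * Qrate tau e f.

Definition bernoulli_prod (rho : R) : config n -> R :=
  fun e => \prod_(i : 'I_n) (if e i then rho else 1 - rho).

(* k-th term of the series  (law at time t) = mu exp(tQ) *)
Definition law_term (tau t : R) (mu : config n -> R) (k : nat) (f : config n) : R :=
  t ^+ k / (k`!)%:R * iter k (evolve tau) mu f.

End Dyn.

Definition tau_of (R : realType) (b rho : R) : R := rho / ((1 - rho) * (1 - b)).

(* Main.v *)
Require Import Defs.
From HB Require Import structures.
From mathcomp Require Import all_boot all_order all_algebra.
From mathcomp Require Import all_classical all_reals all_analysis.
From mathcomp Require Import ring lra zify.
Import Order.TTheory GRing.Theory Num.Theory.
Import numFieldNormedType.Exports.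
Set Implicit Arguments. Unset Strict Implicit. Unset Printing Implicit Defensive.

Local Open Scope classical_set_scope.
Local Open Scope ring_scope.
Local Close Scope classical_set_scope.

Section Aux.
Variables (R : realType) (b : R) (n : nat).

Lemma fly_S (k q : nat) (e : config n) : fly b k.+1 e q =
  if (q < n)%N then
    if occ e q then fly b k e q.+1
    else fun f => (1 - b) * Defs.dirac R (setb e q true) f + b * fly b k e q.+1 f
  else Defs.dirac R e.
Proof. by []. Qed.

Lemma fly_fuel (k q : nat) (g : config n) :
  (n <= q + k)%N -> fly b k.+1 g q = fly b k g q.
Proof.
elim: k q g => [|k IH] q g h.
  by rewrite fly_S ltnNge -(addn0 q) h.
have E := IH q.+1 g.
transitivity (if (q < n)%N then
    if occ g q then fly b k.+1 g q.+1
    else fun f => (1 - b) * Defs.dirac R (setb g q true) f + b * fly b k.+1 g q.+1 f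
  else Defs.dirac R g); first by [].
transitivity (if (q < n)%N then
    if occ g q then fly b k g q.+1
    else fun f => (1 - b) * Defs.dirac R (setb g q true) f + b * fly b k g q.+1 f
  else Defs.dirac R g); last by [].
by rewrite E // addSn -addnS.
Qed.

Lemma fly_fuelD (m k q : nat) (g : config n) :
  (n <= q + k)%N -> fly b (m + k) g q = fly b k g q.
Proof.
move=> h; elim: m => [|m IH] //.
by rewrite addSn fly_fuel // (leq_trans h) // leq_add2l leq_addl.
Qed.

Lemma occ_ord (e : config n) (i : 'I_n) : occ e i = e i.
Proof.
apply/existsP; case: ifP => hi.
  by exists i; rewrite eqxx hi.
by case=> j /andP[/eqP/val_inj -> ]; rewrite hi.
Qed.

Lemma setbE (e : config n) (q : nat) v (j : 'I_n) :
  setb e q v j = if nat_of_ord j == q then v else e j.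
Proof. by rewrite /setb ffunE. Qed.

Lemma setbK1 (e : config n) (i : 'I_n) : e i -> setb (setb e i false) i true = e.
Proof.
move=> h; apply/ffunP => j; rewrite !setbE; case: eqP => // /val_inj -> //.
Qed.

Lemma setbK0 (e : config n) (i : 'I_n) : ~~ e i -> setb (setb e i true) i false = e.
Proof.
move=> h; apply/ffunP => j; rewrite !setbE; case: eqP => // /val_inj ->.
by apply/esym/negbTE.
Qed.

Lemma nu_setb (rho : R) (g : config n) (i : 'I_n) : ~~ g i ->
  bernoulli_prod rho (setb g i true) * (1 - rho) = rho * bernoulli_prod rho g.
Proof.
move=> h; rewrite /bernoulli_prod (bigD1 i) //= [in RHS](bigD1 i) //=.
rewrite setbE eqxx (negbTE h) mulrAC mulrA; congr (_ * _).
apply: eq_bigr => j hj; rewrite setbE.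
by case: eqP => // /val_inj /eqP; rewrite (negbTE hj).
Qed.

Lemma sum_reindex (i : 'I_n) (F : config n -> R) :
  \sum_(e : config n | e i) F e = \sum_(g : config n | ~~ g i) F (setb g i true).
Proof.
rewrite (reindex_onto (fun g => setb g i true) (fun e => setb e i false)).
  apply: eq_bigl => g; rewrite setbE eqxx /=.
  case: (boolP (g i)) => h.
    apply/negbTE/eqP => E; move: h; rewrite -E setbE eqxx //.
  by rewrite setbK0 ?h // eqxx.
by move=> e he; rewrite setbK1.
Qed.

Lemma sum_split_q (q : nat) (hq : (q < n)%N) (X : 'I_n -> R) :
  \sum_(i : 'I_n | (q <= i)%N) X i = X (Ordinal hq) + \sum_(i : 'I_n | (q.+1 <= i)%N) X i.
Proof.
rewrite (bigD1 (Ordinal hq)) //=; congr (_ + _); apply: eq_bigl => i.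
rewrite ltn_neqAle andbC; congr (_ && _).
by rewrite -val_eqE /= eq_sym.
Qed.

End Aux.

Section Main.
Variables (R : realType) (b rho tau : R) (n : nat).
Hypothesis hr1 : rho < 1.
Hypothesis htau : tau * (1 - b) * (1 - rho) = rho.

Let nu : config n -> R := bernoulli_prod rho.

Lemma nu_setb2 (g : config n) (i : 'I_n) : ~~ g i ->
  nu (setb g i true) = tau * (1 - b) * nu g.
Proof.
move=> h; have h1 : 1 - rho != 0 by rewrite subr_eq0 eq_sym lt_eqF.
apply: (mulIf h1); rewrite /nu nu_setb //; move: (bernoulli_prod rho g) => P.
rewrite -[in LHS]htau; ring.
Qed.

Let act (i : 'I_n) (f : config n) : R :=
  \sum_(e : config n | e i) nu e * fly b n.+1 (setb e i false) i.+1 f.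

Lemma claim (d : nat) (f : config n) : (d <= n)%N ->
  tau * \sum_(g : config n) nu g * fly b d.+1 g (n - d) f
  + \sum_(i : 'I_n | (n - d <= i)%N) act i f
  = nu f * tau + \sum_(i : 'I_n | (n - d <= i)%N) (if f i then nu f else 0).
Proof.
elim: d => [|d IH] hd.
  have E : forall X : 'I_n -> R, \sum_(i : 'I_n | (n <= i)%N) X i = 0.
    move=> X; rewrite big_pred0 // => i; apply/negbTE; rewrite -ltnNge; exact: ltn_ord.
  rewrite subn0 !E.
  rewrite !addr0 mulrC; congr (_ * _).
  rewrite (bigD1 f) //= big1 ?addr0.
    by rewrite ltnn /Defs.dirac eqxx mulr1.
  by move=> g hg; rewrite /= ltnn /Defs.dirac eq_sym (negbTE hg) mulr0.
have hq : (n - d.+1 < n)%N by lia.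
have hqS : (n - d.+1).+1 = (n - d)%N by lia.
set q := (n - d.+1)%N in hq hqS *.
set iq := Ordinal hq.
rewrite !(sum_split_q hq) hqS -/iq.
move: (IH (ltnW hd)) => {}IH.
set k := d.+1 in IH *.
set F := fun g => fly b k g (n - d) f.
set D := fun g => Defs.dirac R (setb g q true) f.
have Hact : act iq f = \sum_(g : config n | ~~ g iq) tau * (1 - b) * nu g * F g.
  rewrite /act sum_reindex; apply: eq_bigr => g hg.
  rewrite nu_setb2 // setbK0 // /F.
  have -> : (iq.+1 = n - d)%N by [].
  have -> : n.+1 = ((n - d) + k)%N by rewrite /k; lia.
  by rewrite fly_fuelD // /k; lia.
have Hfly : \sum_(g : config n) nu g * fly b k.+1 g q f =
   \sum_(g : config n) (if g iq then nu g * F g else nu g * ((1 - b) * D g + b * F g)).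
  apply: eq_bigr => g _; rewrite fly_S hq (occ_ord g iq) hqS /F /D.
  by case: (g iq).
have Hdirac : \sum_(g : config n | ~~ g iq) tau * (1 - b) * nu g * D g
   = if f iq then nu f else 0.
  have hD : forall g, D g = (f == setb g iq true)%:R by [].
  case: (boolP (f iq)) => hf.
    have hg0 : ~~ (setb f iq false) iq by rewrite setbE eqxx.
    rewrite (bigD1 (setb f iq false)) //= big1 ?addr0.
      rewrite -(nu_setb2 hg0) setbK1 // hD.
      have -> : setb (setb f q false) iq true = f by exact: setbK1.
      by rewrite eqxx mulr1.
    move=> g /andP[hg hne]; rewrite hD; case: eqP; last by rewrite mulr0.
    by move=> E; move: hne; rewrite E setbK0 // eqxx.
  apply: big1 => g hg; rewrite hD; case: eqP; last by rewrite mulr0.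
  by move=> E; move: hf; rewrite E setbE eqxx.
have K : tau * \sum_(g : config n) nu g * fly b k.+1 g q f + act iq f
   = tau * \sum_(g : config n) nu g * F g + (if f iq then nu f else 0).
  rewrite Hact Hfly -Hdirac !mulr_sumr [X in _ + X = _]big_mkcond [X in _ = _ + X]big_mkcond -!big_split /=.
  by apply: eq_bigr => g _; case: (g iq) => /=; ring.
move: IH K; rewrite /F.
move: (tau * _) (tau * _) (act iq f) (\sum_(i < n | _) act i f) => X1 X2 X3 X4.
move: (if f iq then _ else _) (\sum_(i < n | _) _) => X5 X6 IH K.
rewrite addrA K; lra.
Qed.


Lemma stat (f : config n) : evolve b tau nu f = 0.
Proof.
have C := claim f (leqnn n); rewrite subnn in C.
have E0 : forall X : 'I_n -> R, \sum_(i : 'I_n | (0 <= i)%N) X i = \sum_i X i.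
  by move=> X; apply: eq_bigl => i.
rewrite !E0 in C.
have Hc : \sum_(i : 'I_n) (if f i then nu f else 0) = nu f * #|[set i | f i]|%:R.
  rewrite -big_mkcond /= mulr_natr -sumr_const; apply: eq_bigl => i; by rewrite inE.
rewrite Hc in C.
rewrite /evolve /Qrate /act in C *.
set Fl := fly b n.+1 in C *.
under eq_bigr do rewrite mulrBr mulrDr.
rewrite sumrB big_split /=.
have P1 : \sum_(e : config n) nu e * (\sum_(i : 'I_n | e i) Fl (setb e i false) i.+1 f)
   = \sum_(i : 'I_n) \sum_(e : config n | e i) nu e * Fl (setb e i false) i.+1 f.
  under eq_bigr do rewrite mulr_sumr big_mkcond /=.
  rewrite exchange_big /=; apply: eq_bigr => i _.
  by rewrite [RHS]big_mkcond.
have P2 : \sum_(e : config n) nu e * (tau * Fl e 0 f)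
   = tau * \sum_(e : config n) nu e * Fl e 0 f.
  by rewrite mulr_sumr; apply: eq_bigr => e _; ring.
have P3 : \sum_(e : config n) nu e * (if e == f then #|[set i | e i]|%:R + tau else 0)
   = nu f * (#|[set i | f i]|%:R + tau).
  rewrite (bigD1 f) //= eqxx big1 ?addr0 // => e /negbTE ->; by rewrite mulr0.
rewrite P1 P2 P3.
move: C; move: (tau * _) (\sum_(i < n) _) (nu f) (#|_|%:R) => X1 X2 X3 X4 C.
by rewrite mulrDr; lra.
Qed.
End Main.

Local Open Scope classical_set_scope.

Theorem lemma2p13 (R : realType) (b rho : R)
  (hb0 : 0 < b) (hb1 : b < 1) (hr0 : 0 <= rho) (hr1 : rho < 1)
  (n : nat) (t : R) (ht : 0 <= t) (f : config n) :
  (fun m : nat => \sum_(k < m)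
      law_term b (tau_of b rho) t (@bernoulli_prod R n rho) k f) @ \oo
  --> @bernoulli_prod R n rho f.
Proof.
have hb : 1 - b != 0 by rewrite subr_eq0 eq_sym lt_eqF.
have hr : 1 - rho != 0 by rewrite subr_eq0 eq_sym lt_eqF.
have htau : tau_of b rho * (1 - b) * (1 - rho) = rho.
  by rewrite /tau_of; field; rewrite hb hr.
have Hit : forall k g, iter k.+1 (evolve b (tau_of b rho)) (@bernoulli_prod R n rho) g = 0.
  elim=> [|k IH] g; first exact: stat.
  rewrite iterS; apply: big1 => e _; by rewrite IH mul0r.
apply: cvg_near_cst; exists 1%N => // m /= hm.
case: m hm => // m _.
rewrite big_ord_recl big1 ?addr0.
  by rewrite /law_term /= expr0 fact0 divr1 mul1r.
by move=> i _; rewrite /law_term Hit mulr0.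
Qed.
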